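(* Let $P_1\subseteq P_2$ be meet semilattices with $0$ such that $P_1\subseteq P_2$ preserves finite covers, and let $re:T(P_2)\dashrightarrow T(P_1)$ be the partial map $\xi\mapsto\xi\cap P_1$ (defined when $\xi\cap P_1\ne\emptyset$). Then $U\mapsto re^{-1}(U)$ is an injective morphism of generalized Boolean algebras $\mathcal T_c(P_1)\hookrightarrow\mathcal T_c(P_2)$, and it satisfies $V^{P_1}_{(x:x_1,\dots,x_n)}\mapsto V^{P_2}_{(x:x_1,\dots,x_n)}$ for all $n\ge0$ and $x,x_1,\dots,x_n\in P_1$.
   Context: A meet semilattice with $0$ is a meet semilattice $P$ with least element $0$; $P_1\subseteq P_2$ means an injective meet- and $0$-preserving map, used to identify $P_1$ with a subset of $P_2$. A filter of $P$ is a subset $F$ with $\emptyset\ne F\ne P$, closed upwards and under $\wedge$. $F(P)$ carries the topology generated by $U_x=\{F:x\in F\}$; the sets $U_{(x:x_1,\dots,x_n)}=\{F:x\in F,\ x_1,\dots,x_n\notin F\}$ form a basis of compact open sets. The tight filters $T(P)$ are the closure in $F(P)$ of the ultrafilters (maximal filters), with the subspace topology; $V^P_{(x:x_1,\dots,x_n)}=U_{(x:x_1,\dots,x_n)}\cap T(P)$, $V^P_x=V^P_{(x:)}$. $T(P)$ is Hausdorff, and $\mathcal T_c(P)$ denotes the generalized Boolean algebra (union, intersection, set difference) of compact open subsets of $T(P)$; its elements are the finite unions of sets $V^P_{(x:x_1,\dots,x_n)}$. A finite cover of $x\in P$ is a finite set $\{x_1,\dots,x_n\}$ of elements $\le x$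 such that every $0\ne y\le x$ has $x_i\wedge y\ne0$ for some $i$. $P_1\subseteq P_2$ preserves finite covers if every finite cover in $P_1$ of an element $x\in P_1$ is a finite cover of $x$ in $P_2$. (Under this hypothesis, $\xi\cap P_1$ is a tight filter of $P_1$ whenever $\xi\in T(P_2)$ meets $P_1$.) *)

(* Defs.v *)
From HB Require Import structures.
From mathcomp Require Import all_boot all_order.
From mathcomp Require Import boolp classical_sets.
From Stdlib Require List.

Set Implicit Arguments.
Unset Strict Implicit.
Unset Printing Implicit Defensive.

Import Order.TTheory.
Local Open Scope classical_set_scope.

Section Filters.
Context {d : Order.disp_t} (P : bMeetSemilatticeType d).

Definition is_filter (F : set P) : Prop :=
  (exists x, F x) /\ (exists x, ~ F x) /\
  (forall x y : P, (x <= y)%O -> F x -> F y) /\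
  (forall x y : P, F x -> F y -> F (Order.meet x y)).

Definition is_ultrafilter (F : set P) : Prop :=
  is_filter F /\ forall G, is_filter G -> F `<=` G -> G = F.

Definition basicU (x : P) (xs : seq P) : set (set P) :=
  [set F | is_filter F /\ F x /\ forall y, y \in xs -> ~ F y].

Definition openF (O : set (set P)) : Prop :=
  O `<=` is_filter /\
  forall F, O F -> exists x xs, basicU x xs F /\ basicU x xs `<=` O.

(* Tight filters: closure in F(P) of the set of ultrafilters. *)
Definition is_tight (F : set P) : Prop :=
  is_filter F /\
  forall O, openF O -> O F -> exists G, is_ultrafilter G /\ O G.

Definition openT (O : set (set P)) : Prop :=
  exists O', openF O' /\ O = O' `&` is_tight.

Definition compactT (K : set (set P)) : Prop :=
  K `<=` is_tight /\
  forall (I : Type) (C : I -> set (set P)), (forall i, openT (C i)) ->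
    K `<=` (fun F => exists i, C i F) ->
    exists s : seq I, K `<=` (fun F => exists i, List.In i s /\ C i F).

Definition Tc (U : set (set P)) : Prop := openT U /\ compactT U.

Definition basicV (x : P) (xs : seq P) : set (set P) := basicU x xs `&` is_tight.

Definition is_finite_cover (x : P) (xs : seq P) : Prop :=
  (forall y, y \in xs -> (y <= x)%O) /\
  forall y : P, y != Order.bottom -> (y <= x)%O ->
    exists2 z, z \in xs & Order.meet z y != Order.bottom.

End Filters.

Section Restriction.
Context {d1 d2 : Order.disp_t} (P1 : bMeetSemilatticeType d1)
  (P2 : bMeetSemilatticeType d2) (iota : P1 -> P2).

(* iota identifies P1 with a sub-meet-semilattice-with-0 of P2. *)
Definition sub_embedding : Prop :=
  injective iota /\
  (forall x y, iota (Order.meet x y) = Order.meet (iota x) (iota y)) /\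
  iota Order.bottom = Order.bottom.

Definition preserves_finite_covers : Prop :=
  forall (x : P1) (xs : seq P1),
    is_finite_cover x xs -> is_finite_cover (iota x) (map iota xs).

Definition re (xi : set P2) : set P1 := iota @^-1` xi.

Definition re_inv (U : set (set P1)) : set (set P2) :=
  [set xi | is_tight xi /\ (exists x, re xi x) /\ U (re xi)].

End Restriction.

(* Main.v *)
Require Import Defs.
From HB Require Import structures.
From mathcomp Require Import all_boot all_order.
From mathcomp Require Import boolp classical_sets.
From Stdlib Require List.
Local Open Scope classical_set_scope.
Import Order.TTheory.

Section Generic.
Context {d : Order.disp_t} (P : bMeetSemilatticeType d).
Implicit Types (F G H : set P) (x y z : P).

Lemma filter_bot F : is_filter F -> ~ F Order.bottom.
Proof.
move=> [_ [[w nw] [up _]]] F0; apply: nw; exact: (up _ _ (le0x w) F0).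
Qed.

Lemma filter_up F x y : is_filter F -> (x <= y)%O -> F x -> F y.
Proof. by move=> [_ [_ [up _]]]; apply: up. Qed.

Lemma filter_meet F x y : is_filter F -> F x -> F y -> F (Order.meet x y).
Proof. by move=> [_ [_ [_ m]]]; apply: m. Qed.

Lemma filter_meetE F x y : is_filter F -> F (Order.meet x y) <-> F x /\ F y.
Proof.
move=> fF; split; last by move=> [] ; exact: filter_meet.
move=> h; split; apply: filter_up h => //; [exact: leIl | exact: leIr].
Qed.

Lemma le_bot_eq x : (x <= Order.bottom)%O -> x = Order.bottom.
Proof. by rewrite lex0 => /eqP. Qed.
Arguments le_bot_eq {x}.
Arguments filter_bot {F}.
Arguments filter_up {F x y}.
Arguments filter_meet {F x y}.
Arguments filter_meetE {F x y}.

Lemma ult_exists y : y != Order.bottom -> exists G, is_ultrafilter G /\ G y.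
Proof.
move=> ny.
pose up := [set z : P | (y <= z)%O].
pose PP := fun G : set P => is_filter (up `|` G).
have ch : forall Fm : set (set P), Fm `<=` PP -> total_on Fm subset ->
    PP (\bigcup_(X in Fm) X).
  move=> Fm FP tot.
  have lift : forall X z, Fm X -> (up `|` X) z -> (up `|` \bigcup_(X in Fm) X) z.
    by move=> X z FX [h|h]; [left | right; exists X].
  split; first by exists y; rewrite /setU /=; left; rewrite /up /=.
  split.
    exists Order.bottom; move=> -[h|[X FX h]].
      by move: ny; rewrite /up /= in h; rewrite (le_bot_eq h) eqxx.
    by apply: (filter_bot (FP _ FX)); right.
  split.
    move=> a b ab [h|[X FX h]].
      by left; exact: le_trans ab.
    by apply: (lift X) => //; apply: (filter_up (FP _ FX) ab); right.
  move=> a b [ha|[X FX ha]] [hb|[Y FY hb]].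
  - by left; rewrite /up /= lexI ha hb.
  - by apply: (lift Y) => //; apply: (filter_meet (FP _ FY)); [left|right].
  - by apply: (lift X) => //; apply: (filter_meet (FP _ FX)); [right|left].
  - have [XY|YX] := tot _ _ FX FY.
      by apply: (lift Y) => //; apply: (filter_meet (FP _ FY)); right => //; exact: XY.
    by apply: (lift X) => //; apply: (filter_meet (FP _ FX)); right => //; exact: YX.
have [A [PA maxA]] := Zorn_bigcup ch.
exists (up `|` A); split; last by left; rewrite /up /=.
split => // H fH GH.
have upH : up `|` H = H.
  by apply/seteqP; split => z; [case=> // h; apply: GH; left | move=> h; right].
apply/seteqP; split => // z Hz.
apply: contrapT => nz.
apply: (maxA H); last by rewrite /PP upH.
split; first by move=> w Aw; apply: GH; right.
by move=> HA; apply: nz; right; exact: HA.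
Qed.

Arguments ult_exists {y}.

Lemma ult_sep G z : is_ultrafilter G -> ~ G z ->
  exists g, G g /\ Order.meet g z = Order.bottom.
Proof.
move=> [fG mG] nz; apply: contrapT => ne.
have ne' : forall g, G g -> Order.meet g z != Order.bottom.
  by move=> g Gg; apply/eqP => e; apply: ne; exists g.
pose H := [set w | exists g, G g /\ (Order.meet g z <= w)%O].
have fH : is_filter H.
  split; first by exists z; have [[g Gg] _] := fG; exists g; split => //; exact: leIr.
  split.
    exists Order.bottom; move=> -[g [Gg le]].
    by move: (ne' g Gg); rewrite (le_bot_eq le) eqxx.
  split.
    by move=> a b ab [g [Gg le]]; exists g; split => //; exact: le_trans ab.
  move=> a b [g [Gg la]] [h [Gh lb]]; exists (Order.meet g h); split.
    exact: filter_meet.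
  rewrite lexI; apply/andP; split.
    apply: le_trans la; rewrite lexI leIr andbT.
    exact: (le_trans (leIl _ z) (leIl g h)).
  apply: le_trans lb; rewrite lexI leIr andbT.
  exact: (le_trans (leIl _ z) (leIr h g)).
have GH : G `<=` H by move=> g Gg; exists g; split => //; exact: leIl.
have := mG H fH GH => eH.
apply: nz; rewrite -eH; exists (proj1_sig (cid (proj1 fG))).
split; first exact: (proj2_sig (cid (proj1 fG))).
exact: leIr.
Qed.

Arguments ult_sep {G z}.

Lemma ult_tight G : is_ultrafilter G -> is_tight G.
Proof. by move=> uG; split; [exact: uG.1 | move=> O _ OG; exists G]. Qed.

Lemma ult_avoid G x (Z : seq P) : is_ultrafilter G -> G x -> (forall z, z \in Z -> ~ G z) ->
  exists g, [/\ G g, (g <= x)%O & forall z, z \in Z -> Order.meet g z = Order.bottom].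
Proof.
move=> uG Gx; elim: Z => [|a Z IH] nz.
  by exists x; split => // z; rewrite in_nil.
have [|g [Gg gx gZ]] := IH.
  by move=> z zZ; apply: nz; rewrite inE zZ orbT.
have [h [Gh ha]] := ult_sep uG (nz a (mem_head _ _)).
exists (Order.meet g h); split.
- exact: filter_meet uG.1 Gg Gh.
- exact: le_trans (leIl _ _) gx.
move=> z; rewrite inE => /orP[/eqP->|zZ]; apply: le_bot_eq.
  by rewrite -ha; rewrite lexI leIr andbT; apply: le_trans (leIl _ _) _; exact: leIr.
by rewrite -(gZ z zZ) lexI leIr andbT; apply: le_trans (leIl _ _) _; exact: leIl.
Qed.

Arguments ult_avoid {G x Z}.

Lemma ult_cover G x (Z : seq P) : is_ultrafilter G -> G x -> is_finite_cover x Z ->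
  exists2 z, z \in Z & G z.
Proof.
move=> uG Gx [Zle Zc]; apply: contrapT => nz.
have [g [Gg gx gZ]] := ult_avoid uG Gx (fun z zZ Gz => nz (ex_intro2 _ _ z zZ Gz)).
have g0 : g != Order.bottom by apply/eqP => e; apply: (filter_bot uG.1); rewrite -e.
have [z zZ] := Zc g g0 gx.
by rewrite meetC gZ // eqxx.
Qed.

Arguments ult_cover {G x Z}.
Arguments ult_tight {G}.

Definition CP F := forall x (Z : seq P), F x -> is_finite_cover x Z ->
  exists2 z, z \in Z & F z.

Lemma tight_cover F : is_tight F -> CP F.
Proof.
move=> [fF tF] x Z Fx cZ; apply: contrapT => nz.
have oB : openF (basicU x Z).
  split; first by move=> H [].
  by move=> H hH; exists x, Z; split.
have BF : basicU x Z F.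
  split => //; split => // z zZ Fz; apply: nz; by exists z.
have [G [uG [_ [Gx GZ]]]] := tF _ oB BF.
have [z zZ Gz] := ult_cover uG Gx cZ.
exact: GZ zZ Gz.
Qed.

Lemma sep_lemma F x (xs : seq P) : is_filter F -> CP F -> F x ->
  (forall y, y \in xs -> ~ F y) ->
  exists y, [/\ y != Order.bottom, (y <= x)%O &
    forall a, a \in xs -> Order.meet y a = Order.bottom].
Proof.
move=> fF cF Fx nxs; apply: contrapT => ne.
have [|z /mapP[a axs ->] Fz] := cF x (map (Order.meet x) xs) Fx.
  split; first by move=> w /mapP[a _ ->]; exact: leIl.
  move=> y y0 yx; apply: contrapT => nz; apply: ne; exists y; split => //.
  move=> a axs; apply/eqP; apply: contrapT => ya; apply: nz.
  exists (Order.meet x a); first exact: map_f.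
  by rewrite meetC meetA (meet_l yx); apply/negP.
by apply: (nxs a axs); apply: (filter_up fF _ Fz); exact: leIr.
Qed.

Arguments tight_cover {F}.
Arguments sep_lemma {F x xs}.

Lemma cover_tight F : is_filter F -> CP F -> is_tight F.
Proof.
move=> fF cF; split => // O [_ oO] OF.
have [x [xs [[_ [Fx Fxs]] sO]]] := oO F OF.
have [y [y0 yx yxs]] := sep_lemma fF cF Fx Fxs.
have [G [uG Gy]] := ult_exists y0.
exists G; split => //; apply: sO; split; first exact: uG.1.
split; first exact: filter_up uG.1 yx Gy.
move=> a axs Ga; apply: (filter_bot uG.1).
by rewrite -(yxs a axs); exact: filter_meet uG.1 Gy Ga.
Qed.

Arguments cover_tight {F}.

Lemma openF_basicU x (xs : seq P) : openF (basicU x xs).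
Proof. by split; [move=> H [] | move=> H hH; exists x, xs; split]. Qed.

Lemma basicV_compact x (xs : seq P) : compactT (basicV x xs).
Proof.
split; first by move=> F [].
move=> I C Copen Kcov; apply: contrapT => NFC.
pose K := basicV x xs.
pose cov (s : seq I) : set (set P) := fun F => exists i, List.In i s /\ C i F.
pose FC (A : set (set P)) := exists s, A `<=` cov s.
pose sat (t : seq (P * bool)) (F : set P) :=
  forall l, l \in t -> (if l.2 then F l.1 else ~ F l.1).
pose Q (S : set (P * bool)) := forall t, (forall l, l \in t -> S l) ->
  ~ FC (fun F => K F /\ sat t F).
have ch : forall Fm, Fm `<=` Q -> total_on Fm subset -> Q (\bigcup_(X in Fm) X).
  move=> Fm FQ tot.
  have key : forall t, (forall l, l \in t -> (\bigcup_(X in Fm) X) l) ->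
      t = [::] \/ exists2 X, Fm X & forall l, l \in t -> X l.
    elim=> [|l t IH] ht; first by left.
    right; have [Y FY Yl] := ht l (mem_head _ _).
    have ht' : forall l', l' \in t -> (\bigcup_(X in Fm) X) l'.
      by move=> l' h; apply: ht; rewrite inE h orbT.
    have [->|[X FX Xt]] := IH ht'.
      by exists Y => // l'; rewrite mem_seq1 => /eqP->.
    have [XY|YX] := tot _ _ FX FY.
      by exists Y => // l'; rewrite inE => /orP[/eqP->//|h]; exact: XY (Xt _ h).
    by exists X => // l'; rewrite inE => /orP[/eqP->|h]; [exact: YX | exact: Xt].
  move=> t ht; have [->|[X FX Xt]] := key t ht.
    move=> [s hs]; apply: NFC; exists s => F KF; apply: hs; split; first exact: KF.
    by move=> l; rewrite in_nil.
  exact: FQ FX t Xt.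
have [S [QS maxS]] := Zorn_bigcup ch.
have contr : forall t, (forall l, l \in t -> S l) ->
    (forall F, K F -> sat t F -> False) -> False.
  move=> t tS emp; apply: (QS t tS); exists [::] => F [KF sF].
  by case: (emp F KF sF).
have notQ : forall S', ~ Q S' -> exists t, (forall l, l \in t -> S' l) /\
    FC (fun F => K F /\ sat t F).
  move=> S' nq; apply: contrapT => ne; apply: nq => t ht fc; apply: ne.
  by exists t; split.
have tot : forall a, S (a,true) \/ S (a,false).
  move=> a; apply: contrapT => /not_orP [n1 n2].
  have pr : forall b, ~ S (a,b) -> S `<` (S `|` [set (a,b)]).
    move=> b nb; split; first by move=> l Sl; left.
    by move=> h; apply: nb; apply: h; right.
  have [t1 [t1S [s1 h1]]] := notQ _ (maxS _ (pr _ n1)).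
  have [t2 [t2S [s2 h2]]] := notQ _ (maxS _ (pr _ n2)).
  pose t := [seq l <- t1 ++ t2 | (l != (a,true)) && (l != (a,false))].
  have Sne : forall l, S l -> (l != (a,true)) && (l != (a,false)).
    move=> l Sl; apply/andP; split; apply/eqP => e.
      by apply: n1; rewrite -e.
    by apply: n2; rewrite -e.
  apply: (QS t).
    move=> l; rewrite mem_filter mem_cat => /andP[/andP[na nb] /orP[h|h]].
      by case: (t1S l h) => // e; move: na; rewrite e eqxx.
    by case: (t2S l h) => // e; move: nb; rewrite e eqxx.
  exists (s1 ++ s2) => F [KF sF].
  have [Fa|nFa] := pselect (F a).
    have st1 : sat t1 F.
      move=> l lt1; case: (t1S l lt1) => [Sl|e]; last by rewrite e.
      by apply: sF; rewrite mem_filter Sne // mem_cat lt1.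
    have [i [ii Ci]] := h1 F (conj KF st1).
    by exists i; split => //; apply: List.in_or_app; left.
  have st2 : sat t2 F.
    move=> l lt2; case: (t2S l lt2) => [Sl|e]; last by rewrite e.
    by apply: sF; rewrite mem_filter Sne // mem_cat lt2 orbT.
  have [i [ii Ci]] := h2 F (conj KF st2).
  by exists i; split => //; apply: List.in_or_app; right.
pose F0 : set P := fun a => S (a,true).
have nF0 : forall a, ~ F0 a -> S (a,false) by move=> a na; case: (tot a).
have Fx0 : F0 x.
  apply: contrapT => n; apply: (contr [:: (x,false)]).
    by move=> l; rewrite inE => /eqP->; exact: nF0.
  by move=> F KF sF; apply: (sF (x,false) (mem_head _ _)); exact: KF.1.2.1.
have fF0 : is_filter F0.
  split; first by exists x.
  split.
    exists Order.bottom => h; apply: (contr [:: (Order.bottom,true)]).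
      by move=> l; rewrite inE => /eqP->.
    by move=> F KF sF; apply: (filter_bot KF.1.1); exact: (sF _ (mem_head _ _)).
  split.
    move=> a b ab Fa; apply: contrapT => nb.
    apply: (contr [:: (a,true); (b,false)]).
      by move=> l; rewrite !inE => /orP[/eqP->|/eqP->] //; exact: nF0.
    move=> F KF sF; apply: (sF (b,false)); first by rewrite !inE eqxx orbT.
    apply: (filter_up KF.1.1 ab); exact: (sF _ (mem_head _ _)).
  move=> a b Fa Fb; apply: contrapT => nb.
  apply: (contr [:: (a,true); (b,true); (Order.meet a b,false)]).
    by move=> l; rewrite !inE => /orP[/eqP->|/orP[/eqP->|/eqP->]] //; exact: nF0.
  move=> F KF sF; apply: (sF (Order.meet a b,false)); first by rewrite !inE eqxx !orbT.
  apply: (filter_meet KF.1.1); first exact: (sF _ (mem_head _ _)).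
  by apply: (sF (b,true)); rewrite !inE eqxx orbT.
have nxs0 : forall y, y \in xs -> ~ F0 y.
  move=> y yxs Fy; apply: (contr [:: (y,true)]).
    by move=> l; rewrite inE => /eqP->.
  by move=> F KF sF; apply: (KF.1.2.2 y yxs); exact: (sF _ (mem_head _ _)).
have cF0 : CP F0.
  move=> a Z Fa cZ; apply: contrapT => nz.
  apply: (contr ((a,true) :: map (fun z => (z,false)) Z)).
    move=> l; rewrite inE => /orP[/eqP->//|/mapP[z zZ ->]].
    by apply: nF0 => Fz; apply: nz; exists z.
  move=> F KF sF.
  have [z zZ Fz] := tight_cover KF.2 a Z (sF _ (mem_head _ _)) cZ.
  apply: (sF (z,false) _ Fz).
  by rewrite inE (map_f (fun z => (z,false)) zZ) orbT.
have KF0 : K F0.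
  split; last exact: cover_tight fF0 cF0.
  by split => //; split.
have [i Ci] := Kcov F0 KF0.
have [O' [oO' eC]] := Copen i.
rewrite eC in Ci; have [a [as_ [Ba sO]]] := oO'.2 F0 Ci.1.
apply: (QS ((a,true) :: map (fun z => (z,false)) as_)).
  move=> l; rewrite inE => /orP[/eqP->|/mapP[z zas ->]]; first exact: Ba.2.1.
  by apply: nF0; exact: Ba.2.2.
exists [:: i] => F [KF sF]; exists i; split; first by left.
rewrite eC; split; last exact: KF.2.
apply: sO; split; first exact: KF.1.1.
split; first exact: (sF _ (mem_head _ _)).
move=> z zas; apply: (sF (z,false)).
by rewrite inE (map_f (fun z => (z,false)) zas) orbT.
Qed.

Definition UB (s : seq (P * seq P)) : set (set P) :=
  fun F => exists i, List.In i s /\ basicV i.1 i.2 F.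

Lemma compact_UB s : compactT (UB s).
Proof.
elim: s => [|i s IH].
  split; first by move=> F [j [[] _]].
  by move=> I C _ _; exists [::] => F [j [[] _]].
split; first by move=> F [j [_ [_ T]]].
move=> I C Co cov.
have [s1 h1] := (basicV_compact i.1 i.2).2 I C Co
  (fun F hF => cov F (ex_intro _ i (conj (or_introl erefl) hF))).
have [s2 h2] := IH.2 I C Co
  (fun F '(ex_intro j (conj jj hF)) => cov F (ex_intro _ j (conj (or_intror jj) hF))).
exists (s1 ++ s2) => F [j [[<-|jj] hF]].
  by have [k [kk Ck]] := h1 F hF; exists k; split => //; apply: List.in_or_app; left.
have [k [kk Ck]] := h2 F (ex_intro _ j (conj jj hF)).
by exists k; split => //; apply: List.in_or_app; right.
Qed.

Lemma Tc_UB s : Tc (UB s).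
Proof.
split; last exact: compact_UB.
exists (fun F => exists i, List.In i s /\ basicU i.1 i.2 F); split.
  split; first by move=> F [i [_ []]].
  move=> F [i [ii B]]; exists i.1, i.2; split => // G BG; by exists i.
apply/seteqP; split => F.
  by move=> [i [ii [B T]]]; split => //; exists i.
by move=> [[i [ii B]] T]; exists i; split.
Qed.

Lemma Tc_UB_of U : Tc U -> exists s, U = UB s.
Proof.
move=> [[O' [oO' eU]] [Ut cU]].
pose I := {i : P * seq P | basicV i.1 i.2 `<=` U}.
pose C := fun j : I => basicV (sval j).1 (sval j).2.
have Co : forall j, openT (C j).
  by move=> j; exists (basicU (sval j).1 (sval j).2); split => //; exact: openF_basicU.
have cov : U `<=` (fun F => exists j, C j F).
  move=> F UF; have UF' := UF; rewrite eU in UF'.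
  have [a [as_ [Ba sO]]] := oO'.2 F UF'.1.
  have sub : basicV a as_ `<=` U.
    by move=> G [BG TG]; rewrite eU; split => //; apply: sO.
  exists (exist _ (a,as_) sub); rewrite /C /=; split; [exact: Ba | exact: UF'.2].
have [s hs] := cU I C Co cov.
exists (map sval s); apply/seteqP; split => F.
  move=> UF; have [j [jj Cj]] := hs F UF.
  by exists (sval j); split => //; apply: List.in_map.
move=> [i [ii B]]; have [j [ej _]] := proj1 (List.in_map_iff _ _ _) ii.
by move: (svalP j); rewrite ej; apply.
Qed.

Lemma avoid_UB (e : set P) s : is_tight e -> ~ UB s e ->
  exists c cs, basicV c cs e /\ forall F, basicV c cs F -> ~ UB s F.
Proof.
move=> te; have fe := te.1.
elim: s => [|[b bs] s IH] nU.
  have [c ec] := fe.1; exists c, [::]; split; last by move=> F _ [j [[] _]].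
  by split => //; split => //; split => // y; rewrite in_nil.
have nU' : ~ UB s e by move=> [j [jj B]]; apply: nU; exists j; split => //; right.
have nB : ~ basicV b bs e by move=> B; apply: nU; exists (b,bs); split => //; left.
have [c [cs [[[_ [ec ecs]] _] hF]]] := IH nU'.
have [eb|neb] := pselect (e b).
  have [b' b'bs eb'] : exists2 b', b' \in bs & e b'.
    apply: contrapT => nb; apply: nB; split => //; split => //; split => // y ybs ey.
    by apply: nb; exists y.
  exists (Order.meet c b'), cs; split.
    by split => //; split => //; split => //; exact: filter_meet.
  move=> F [[fF [Fcb Fcs]] tF] [j [[<-|jj] B]].
    by have := (filter_meetE fF).1 Fcb => -[_ Fb']; apply: B.1.2.2 b'bs Fb'.
  apply: (hF F _ (ex_intro _ j (conj jj B))).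
  by split => //; split => //; split => //; exact: ((filter_meetE fF).1 Fcb).1.
exists c, (b :: cs); split.
  split => //; split => //; split => // y; rewrite inE => /orP[/eqP->//|]; exact: ecs.
move=> F [[fF [Fc Fcs]] tF] [j [[<-|jj] B]].
  by apply: (Fcs b); [exact: mem_head | exact: B.1.2.1].
apply: (hF F _ (ex_intro _ j (conj jj B))).
by split => //; split => //; split => // y ycs; apply: Fcs; rewrite inE ycs orbT.
Qed.

End Generic.
Arguments filter_bot {d P F}.
Arguments filter_up {d P F x y}.
Arguments filter_meet {d P F x y}.
Arguments filter_meetE {d P F x y}.
Arguments ult_exists {d P y}.
Arguments ult_tight {d P G}.
Arguments tight_cover {d P F}.
Arguments sep_lemma {d P F x xs}.
Arguments cover_tight {d P F}.
Arguments avoid_UB {d P e s}.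
Arguments Tc_UB_of {d P U}.
Arguments Tc_UB {d P s}.
Arguments UB {d P}.

Section Restr.
Context {d1 d2 : Order.disp_t} (P1 : bMeetSemilatticeType d1)
  (P2 : bMeetSemilatticeType d2) (iota : P1 -> P2)
  (emb : sub_embedding iota) (pfc : preserves_finite_covers iota).

Lemma iota_meet x y : iota (Order.meet x y) = Order.meet (iota x) (iota y).
Proof. exact: emb.2.1. Qed.

Lemma iota0 : iota Order.bottom = Order.bottom.
Proof. exact: emb.2.2. Qed.

Lemma iota_le x y : (x <= y)%O -> (iota x <= iota y)%O.
Proof. by move=> /meet_l e; apply/meet_idPl; rewrite -iota_meet e. Qed.

Arguments iota_le {x y}.

Lemma iota_ne0 y : y != Order.bottom -> iota y != Order.bottom.
Proof.
move=> y0; apply/eqP => e; move/eqP: y0; apply; apply: emb.1.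
by rewrite e iota0.
Qed.

Arguments iota_ne0 {y}.

Lemma re_filter (xi : set P2) : is_filter xi -> (exists x, re iota xi x) ->
  is_filter (re iota xi).
Proof.
move=> fx ne; split => //; split.
  by exists Order.bottom; rewrite /re /= iota0; exact: filter_bot fx.
split.
  by move=> x y xy h; rewrite /re /=; exact: filter_up fx (iota_le xy) h.
by move=> x y hx hy; rewrite /re /= iota_meet; exact: filter_meet fx hx hy.
Qed.

Lemma re_tight (xi : set P2) : is_tight xi -> (exists x, re iota xi x) ->
  is_tight (re iota xi).
Proof.
move=> tx ne; apply: cover_tight; first exact: re_filter tx.1 ne.
move=> x Z rx cZ.
have [z' /mapP[z zZ ->] xz] := tight_cover tx (iota x) (map iota Z) rx (pfc _ _ cZ).
by exists z.
Qed.

Lemma basicV_map x (xs : seq P1) :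
  re_inv iota (basicV x xs) = basicV (iota x) (map iota xs).
Proof.
apply/seteqP; split => xi.
  move=> [tx [ne [[_ [rx rxs]] _]]]; split => //; split; first exact: tx.1.
  split => // y /mapP[a axs ->]; exact: rxs.
move=> [[fx [xx xxs]] tx]; have ne : exists x, re iota xi x by exists x.
split => //; split => //; split; last exact: re_tight.
split; first exact: re_filter.
split => // y yxs; apply: xxs; exact: map_f.
Qed.

Lemma basicV_nonempty (e : set P1) x (xs : seq P1) : basicV x xs e ->
  exists xi, basicV (iota x) (map iota xs) xi.
Proof.
move=> [[fe [ex exs]] te].
have [y [y0 yx yxs]] := sep_lemma fe (tight_cover te) ex exs.
have [G [uG Gy]] := ult_exists (iota_ne0 y0).
exists G; split; last exact: ult_tight uG.
split; first exact: uG.1.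
split; first exact: filter_up uG.1 (iota_le yx) Gy.
move=> z /mapP[a axs ->] Ga; apply: (filter_bot uG.1).
by rewrite -iota0 -(yxs a axs) iota_meet; exact: filter_meet uG.1 Gy Ga.
Qed.

Lemma re_inv_UB s : re_inv iota (UB s) =
  UB (map (fun i => (iota i.1, map iota i.2)) s).
Proof.
apply/seteqP; split => xi.
  move=> [tx [ne [i [ii B]]]]; exists (iota i.1, map iota i.2); split.
    exact: (List.in_map (fun i => (iota i.1, map iota i.2))).
  by rewrite /= -basicV_map.
move=> [j [jj B]]; have [i [ej ii]] := proj1 (List.in_map_iff _ _ _) jj.
rewrite -ej /= -basicV_map in B; have [tx [ne B']] := B.
by split => //; split => //; exists i.
Qed.

Lemma re_inv_sub (U W : set (set P1)) : U `<=` W -> re_inv iota U `<=` re_inv iota W.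
Proof. by move=> UW xi [t [n h]]; split => //; split => //; exact: UW. Qed.

Lemma inj_half (U W : set (set P1)) : Tc U -> Tc W ->
  re_inv iota U `<=` re_inv iota W -> U `<=` W.
Proof.
move=> TU TW sUW e Ue; apply: contrapT => nWe.
have [s eW] := Tc_UB_of TW; rewrite eW in nWe sUW.
have te : is_tight e := TU.2.1 e Ue.
have [c [cs [Bc hF]]] := avoid_UB te nWe.
have [[O' [oO' eU]] _] := TU.
have Ue' := Ue; rewrite eU in Ue'.
have [a [as_ [Ba sO]]] := oO'.2 e Ue'.1.
pose B := basicV (Order.meet a c) (as_ ++ cs).
have BU : B `<=` U.
  move=> F [[fF [Fac Fas]] tF]; rewrite eU; split => //; apply: sO.
  split => //; split; first exact: ((filter_meetE fF).1 Fac).1.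
  by move=> y yas; apply: Fas; rewrite mem_cat yas.
have BW : forall F, B F -> ~ UB s F.
  move=> F [[fF [Fac Fas]] tF]; apply: hF; split => //; split => //.
  split; first exact: ((filter_meetE fF).1 Fac).2.
  by move=> y ycs; apply: Fas; rewrite mem_cat ycs orbT.
have Be : B e.
  split; last exact: te.
  have [_ [ea eas]] := Ba; have [[_ [ec ecs]] _] := Bc.
  split; first exact: te.1.
  split; first exact: filter_meet te.1 ea ec.
  by move=> y; rewrite mem_cat => /orP[]; [exact: eas | exact: ecs].
have [xi Bxi] := basicV_nonempty _ _ _ Be.
rewrite -basicV_map in Bxi.
have [_ [_ Wr]] := sUW xi (re_inv_sub _ _ BU _ Bxi).
have [_ [_ Br]] := Bxi.
exact: BW _ Br Wr.
Qed.

End Restr.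

Theorem mainTheorem7 {d1 d2 : Order.disp_t} (P1 : bMeetSemilatticeType d1)
    (P2 : bMeetSemilatticeType d2) (iota : P1 -> P2) :
  sub_embedding iota -> preserves_finite_covers iota ->
  (forall U, Tc U -> Tc (re_inv iota U)) /\
  re_inv iota set0 = set0 /\
  (forall U W, Tc U -> Tc W ->
     re_inv iota (U `|` W) = re_inv iota U `|` re_inv iota W) /\
  (forall U W, Tc U -> Tc W ->
     re_inv iota (U `&` W) = re_inv iota U `&` re_inv iota W) /\
  (forall U W, Tc U -> Tc W ->
     re_inv iota (U `\` W) = re_inv iota U `\` re_inv iota W) /\
  (forall U W, Tc U -> Tc W -> re_inv iota U = re_inv iota W -> U = W) /\
  (forall (x : P1) (xs : seq P1),
     re_inv iota (basicV x xs) = basicV (iota x) (map iota xs)).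
Proof.
move=> emb pfc; split.
  move=> U TU; have [s ->] := Tc_UB_of TU.
  rewrite (@re_inv_UB _ _ _ _ _ emb pfc); exact: Tc_UB.
split; first by apply/seteqP; split => xi // [_ [_ []]].
split.
  move=> U W _ _; apply/seteqP; split => xi.
    by move=> [t [n [h|h]]]; [left|right]; split.
  by move=> [[t [n h]]|[t [n h]]]; split => //; split => //; [left|right].
split.
  move=> U W _ _; apply/seteqP; split => xi.
    by move=> [t [n [h1 h2]]]; split; split.
  by move=> [[t [n h1]] [_ [_ h2]]]; split => //; split.
split.
  move=> U W _ _; apply/seteqP; split => xi.
    move=> [t [n [h1 h2]]]; split; first by split.
    by move=> [_ [_ h]].
  by move=> [[t [n h1]] h2]; split => //; split => //; split => // h; apply: h2.
split; last exact: (@basicV_map _ _ _ _ _ emb pfc).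
move=> U W TU TW e; apply/seteqP; split.
  by apply: (@inj_half _ _ _ _ _ emb pfc _ _ TU TW); rewrite e.
by apply: (@inj_half _ _ _ _ _ emb pfc _ _ TW TU); rewrite e.
Qed.
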